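(* Let $(X,d)$ be a metric space with $|X|\geqslant 3$ and let $T\colon X\to X$ be a generalized Ćirić–Reich–Rus type mapping with constants $\alpha,\lambda\geqslant 0$, $2\alpha+\frac{3\lambda}{2}<1$, i.e. $$d(Tx,Ty)+d(Ty,Tz)+d(Tx,Tz)\leqslant \alpha\big(d(x,y)+d(y,z)+d(z,x)\big)+\lambda\big(d(x,Tx)+d(y,Ty)+d(z,Tz)\big)$$ for all pairwise distinct $x,y,z\in X$. If $x$ is an accumulation point of $X$ and $T$ is continuous at $x$, then $$d(Tx,Ty)\leqslant \alpha\, d(x,y)+\lambda\left(d(x,Tx)+\frac{d(y,Ty)}{2}\right)$$ holds for all $y\in X$. *)

(* Defs.v *)
From Stdlib Require Import Reals.
Open Scope R_scope.

Definition is_metric {X : Type} (d : X -> X -> R) : Prop :=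
  (forall x y, 0 <= d x y) /\
  (forall x y, d x y = 0 <-> x = y) /\
  (forall x y, d x y = d y x) /\
  (forall x y z, d x z <= d x y + d y z).

Definition at_least_three (X : Type) : Prop :=
  exists a b c : X, a <> b /\ b <> c /\ a <> c.

Definition gen_CRR {X : Type} (d : X -> X -> R) (T : X -> X) (alpha lambda : R) : Prop :=
  0 <= alpha /\ 0 <= lambda /\ 2 * alpha + 3 * lambda / 2 < 1 /\
  forall x y z : X, x <> y -> y <> z -> x <> z ->
    d (T x) (T y) + d (T y) (T z) + d (T x) (T z)
    <= alpha * (d x y + d y z + d z x) + lambda * (d x (T x) + d y (T y) + d z (T z)).

Definition accumulation_point {X : Type} (d : X -> X -> R) (x : X) : Prop :=
  forall eps, 0 < eps -> exists y, y <> x /\ d x y < eps.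

Definition continuous_at {X : Type} (d : X -> X -> R) (T : X -> X) (x : X) : Prop :=
  forall eps, 0 < eps -> exists delta, 0 < delta /\
    forall y, d x y < delta -> d (T x) (T y) < eps.

(* Main.v *)
Require Import Defs.
From Stdlib Require Import Reals Lra.
Open Scope R_scope.

Theorem proposition2p5 (X : Type) (d : X -> X -> R) (T : X -> X) (alpha lambda : R)
  (x : X) :
  is_metric d -> at_least_three X -> gen_CRR d T alpha lambda ->
  accumulation_point d x -> continuous_at d T x ->
  forall y : X, d (T x) (T y) <= alpha * d x y + lambda * (d x (T x) + d y (T y) / 2).
Proof.
  intros [Hpos [Hz [Hs Ht]]] _ [Ha [Hl [Hal H]]] Hacc Hc y.
  destruct (Rle_lt_dec (d (T x) (T y)) (alpha * d x y + lambda * (d x (T x) + d y (T y) / 2))) as [ok|bad]; [exact ok|].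
  exfalso.
  set (g := d (T x) (T y) - (alpha * d x y + lambda * (d x (T x) + d y (T y) / 2))).
  assert (gpos : 0 < g) by (unfold g; lra).
  destruct (Rle_lt_dec (d x y) 0) as [h0|hxy].
  { assert (Exy : x = y) by (apply Hz; pose proof (Hpos x y); lra).
    subst y. assert (d (T x) (T x) = 0) by (apply Hz; reflexivity).
    assert (d x x = 0) by (apply Hz; reflexivity).
    pose proof (Hpos x (T x)). unfold g in gpos. rewrite H0, H1 in gpos. nra. }
  destruct (Hc (g / (1 + lambda))) as [del [Hdel Hcd]].
  { apply Rdiv_lt_0_compat; lra. }
  set (e := Rmin del (Rmin (d x y) (g / (2*alpha + lambda + 1)))).
  assert (epos : 0 < e).
  { unfold e. repeat apply Rmin_pos; try lra. apply Rdiv_lt_0_compat; lra. }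
  destruct (Hacc e epos) as [z [zx dz]].
  assert (dz1 : d x z < del) by (pose proof (Rmin_l del (Rmin (d x y) (g / (2*alpha + lambda + 1)))); unfold e in dz; lra).
  assert (dz2 : d x z < d x y) by (pose proof (Rmin_r del (Rmin (d x y) (g / (2*alpha + lambda + 1)))); pose proof (Rmin_l (d x y) (g / (2*alpha + lambda + 1))); unfold e in dz; lra).
  assert (dz3 : d x z < g / (2*alpha + lambda + 1)) by (pose proof (Rmin_r del (Rmin (d x y) (g / (2*alpha + lambda + 1)))); pose proof (Rmin_r (d x y) (g / (2*alpha + lambda + 1))); unfold e in dz; lra).
  assert (xy : x <> y) by (intro E; subst y; assert (d x x = 0) by (apply Hz; reflexivity); lra).
  assert (yz : y <> z) by (intro E; subst z; lra).
  assert (xz : x <> z) by (intro E; apply zx; now symmetry).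
  pose proof (H x y z xy yz xz) as Hm.
  pose proof (Hcd z dz1) as Htz.
  assert (Htz' : d (T x) (T z) * (1 + lambda) < g).
  { apply (Rmult_lt_compat_r (1 + lambda)) in Htz; [|lra].
    unfold Rdiv in Htz. rewrite Rmult_assoc, Rinv_l in Htz; lra. }
  assert (dz' : d x z * (2*alpha + lambda + 1) < g).
  { apply (Rmult_lt_compat_r (2*alpha + lambda + 1)) in dz3; [|lra].
    unfold Rdiv in dz3. rewrite Rmult_assoc, Rinv_l in dz3; lra. }
  pose proof (Ht y x z). pose proof (Ht z x (T z)). pose proof (Ht x (T x) (T z)).
  pose proof (Ht (T x) (T z) (T y)).
  rewrite (Hs z x) in *. rewrite (Hs (T z) (T y)) in *.
  pose proof (Hpos x z). pose proof (Hpos (T x) (T z)).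
  assert (alpha * d y z <= alpha * (d x y + d x z)) by (apply Rmult_le_compat_l; [lra| pose proof (Hs y x); lra]).
  assert (lambda * d z (T z) <= lambda * (d x z + d x (T x) + d (T x) (T z))) by (apply Rmult_le_compat_l; lra).
  unfold g in *. nra.
Qed.
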